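(* Let $X$ be a normed linear space, $F:X\rightrightarrows\mathbb{R}^p$, $(x,y)\in\mathrm{gph}F$, with $F$ Lipschitz around $x$ and $y\in\mathcal{PE}(F(x),P)$, and let $S$ be a nonempty compact subset of $X\times\mathbb{R}^p$. Assume $$0\in\mathcal{E}\Big(\mathrm{cl}\Big(\bigcup_{(v,w)\in S}\big(w+D_\uparrow F((x,y);v)\big)\Big),P\Big)+P.$$ Then there exists $(v,w)\in S$ such that $-w\in DF_\uparrow((x,y);v)$.
   Context: $P\subset\mathbb{R}^p$ is a closed convex pointed cone containing $0$ with nonempty interior; $F_\uparrow(x)=F(x)+P$. $\mathcal{E}(S,P)=\{y\in S:(y-P)\cap S=\{y\}\}$; contingent cone $T_S(z)=\{v:\exists h_k\to0^+,\exists v_k\to v,z+h_kv_k\in S\}$; $\mathcal{PE}(S,P)=\{y\in\mathcal{E}(S,P):T_{S+P}(y)\cap(-P)=\{0\}\}$. $F$ is Lipschitz around $x$ if there are $l>0$ and a neighborhood $\mathcal{O}$ of $x$ with $F(x_1)\subset F(x_2)+l\|x_1-x_2\|\mathbf{B}$ for $x_1,x_2\in\mathcal{O}$. Contingent derivative $DF(x,y)$: graph $T_{\mathrm{gph}F}(x,y)$, value at $v$ written $DF((x,y);v)$. Generalized contingent epiderivative: $D_\uparrow F((x,y);v)=\mathcal{E}(DF_\uparrow((x,y);v),P)$ (empty if no minimal element exists). *)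

(* Defs.v *)
From Stdlib Require Import Reals Lra.
From Stdlib Require Vectors.Fin.
Open Scope R_scope.

Record NormedSpace := {
  ns_car :> Type;
  ns_zero : ns_car;
  ns_add : ns_car -> ns_car -> ns_car;
  ns_opp : ns_car -> ns_car;
  ns_scal : R -> ns_car -> ns_car;
  ns_norm : ns_car -> R;
  ns_add_assoc : forall a b c, ns_add a (ns_add b c) = ns_add (ns_add a b) c;
  ns_add_comm : forall a b, ns_add a b = ns_add b a;
  ns_add_zero : forall a, ns_add a ns_zero = a;
  ns_add_opp : forall a, ns_add a (ns_opp a) = ns_zero;
  ns_scal_assoc : forall s t a, ns_scal s (ns_scal t a) = ns_scal (s * t) a;
  ns_scal_one : forall a, ns_scal 1 a = a;
  ns_scal_distr_l : forall t a b, ns_scal t (ns_add a b) = ns_add (ns_scal t a) (ns_scal t b);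
  ns_scal_distr_r : forall s t a, ns_scal (s + t) a = ns_add (ns_scal s a) (ns_scal t a);
  ns_norm_eq0 : forall a, ns_norm a = 0 -> a = ns_zero;
  ns_norm_scal : forall t a, ns_norm (ns_scal t a) = Rabs t * ns_norm a;
  ns_norm_triangle : forall a b, ns_norm (ns_add a b) <= ns_norm a + ns_norm b
}.

Definition ns_dist (X : NormedSpace) (a b : X) : R :=
  ns_norm X (ns_add X a (ns_opp X b)).

(** * R^p, with the max norm (all norms on R^p are equivalent) *)
Definition Rp (p : nat) : Type := Fin.t p -> R.

Fixpoint fmax (n : nat) : (Fin.t n -> R) -> R :=
  match n return (Fin.t n -> R) -> R with
  | O => fun _ => 0
  | S m => fun f => Rmax (f Fin.F1) (fmax m (fun i => f (Fin.FS i)))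
  end.

Definition vzero {p} : Rp p := fun _ => 0.
Definition vadd {p} (a b : Rp p) : Rp p := fun i => a i + b i.
Definition vopp {p} (a : Rp p) : Rp p := fun i => - a i.
Definition vscal {p} (t : R) (a : Rp p) : Rp p := fun i => t * a i.
Definition vnorm {p} (a : Rp p) : R := fmax p (fun i => Rabs (a i)).
Definition vdist {p} (a b : Rp p) : R := vnorm (vadd a (vopp b)).

Section Generic.
Context {V : Type} (d : V -> V -> R).

Definition is_open (U : V -> Prop) : Prop :=
  forall z, U z -> exists eps, 0 < eps /\ forall z', d z z' < eps -> U z'.

Definition closure (A : V -> Prop) : V -> Prop :=
  fun z => forall eps, 0 < eps -> exists a, A a /\ d z a < eps.

Definition is_closed (A : V -> Prop) : Prop :=
  forall z, closure A z -> A z.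

Definition is_compact (S : V -> Prop) : Prop :=
  forall (I : Type) (U : I -> V -> Prop),
    (forall i, is_open (U i)) ->
    (forall z, S z -> exists i, U i z) ->
    exists l : list I, forall z, S z -> exists i, List.In i l /\ U i z.

Context (add : V -> V -> V) (scal : R -> V -> V).

Definition tcone (S : V -> Prop) (z : V) : V -> Prop :=
  fun v => exists (h : nat -> R) (w : nat -> V),
    (forall n, 0 < h n) /\ Un_cv h 0 /\
    Un_cv (fun n => d (w n) v) 0 /\
    (forall n, S (add z (scal (h n) (w n)))).
End Generic.

Definition pdist (X : NormedSpace) {p} (a b : X * Rp p) : R :=
  ns_dist X (fst a) (fst b) + vdist (snd a) (snd b).
Definition padd (X : NormedSpace) {p} (a b : X * Rp p) : X * Rp p :=
  (ns_add X (fst a) (fst b), vadd (snd a) (snd b)).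
Definition pscal (X : NormedSpace) {p} (t : R) (a : X * Rp p) : X * Rp p :=
  (ns_scal X t (fst a), vscal t (snd a)).

Definition ordering_cone {p} (P : Rp p -> Prop) : Prop :=
  P vzero /\
  is_closed vdist P /\
  (forall t a, 0 <= t -> P a -> P (vscal t a)) /\
  (forall a b, P a -> P b -> P (vadd a b)) /\
  (forall a, P a -> P (vopp a) -> a = vzero) /\
  (exists c eps, 0 < eps /\ forall a, vdist a c < eps -> P a).

Definition msum {p} (S P : Rp p -> Prop) : Rp p -> Prop :=
  fun y => exists a q, S a /\ P q /\ y = vadd a q.

Definition Emin {p} (S P : Rp p -> Prop) : Rp p -> Prop :=
  fun y => S y /\
    forall z, ((exists q, P q /\ z = vadd y (vopp q)) /\ S z) <-> z = y.

Definition PEmin {p} (S P : Rp p -> Prop) : Rp p -> Prop :=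
  fun y => Emin S P y /\
    forall v, (tcone vdist vadd vscal (msum S P) y v /\ P (vopp v)) <-> v = vzero.

Definition Fup {X : NormedSpace} {p} (F : X -> Rp p -> Prop) (P : Rp p -> Prop)
  : X -> Rp p -> Prop := fun x => msum (F x) P.

Definition gph {X : NormedSpace} {p} (F : X -> Rp p -> Prop) : X * Rp p -> Prop :=
  fun z => F (fst z) (snd z).

Definition lipschitz_around {X : NormedSpace} {p} (F : X -> Rp p -> Prop) (x : X) : Prop :=
  exists l delta, 0 < l /\ 0 < delta /\
    forall x1 x2, ns_dist X x1 x < delta -> ns_dist X x2 x < delta ->
      forall y1, F x1 y1 -> exists y2 b, F x2 y2 /\ vnorm b <= 1 /\
        y1 = vadd y2 (vscal (l * ns_dist X x1 x2) b).

Definition DF {X : NormedSpace} {p} (F : X -> Rp p -> Prop) (x : X) (y : Rp p) (v : X)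
  : Rp p -> Prop :=
  fun w => tcone (pdist X) (padd X) (pscal X) (gph F) (x, y) (v, w).

Definition Dup {X : NormedSpace} {p} (F : X -> Rp p -> Prop) (P : Rp p -> Prop)
  (x : X) (y : Rp p) (v : X) : Rp p -> Prop :=
  Emin (DF (Fup F P) x y v) P.

(* Main.v *)
Require Import Defs.
From Stdlib Require Import Reals.
Open Scope R_scope.
From Stdlib Require Import Lra Lia List Classical ClassicalEpsilon FunctionalExtensionality.

Lemma fmax_ge : forall n (f : Fin.t n -> R) i, f i <= fmax n f.
Proof.
  intros n f i; revert f; induction i; intros f; simpl.
  - apply Rmax_l.
  - eapply Rle_trans; [apply (IHi (fun j => f (Fin.FS j)))|apply Rmax_r].
Qed.

Lemma fmax_le : forall n (f : Fin.t n -> R) c, 0 <= c -> (forall i, f i <= c) -> fmax n f <= c.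
Proof.
  induction n; intros f c Hc H; simpl; auto.
  apply Rmax_lub; auto.
Qed.

Lemma fmax_nonneg : forall n (f : Fin.t n -> R), (forall i, 0 <= f i) -> 0 <= fmax n f.
Proof.
  destruct n; intros f H; simpl. lra.
  eapply Rle_trans; [apply (H Fin.F1)|apply Rmax_l].
Qed.

Lemma vnorm_nonneg {p} (a : Rp p) : 0 <= vnorm a.
Proof. apply fmax_nonneg; intros; apply Rabs_pos. Qed.

Lemma vnorm_comp {p} (a : Rp p) i : Rabs (a i) <= vnorm a.
Proof. apply (fmax_ge p (fun i => Rabs (a i))). Qed.

Lemma vnorm_le {p} (a : Rp p) c : (forall i, Rabs (a i) <= c) -> 0 <= c -> vnorm a <= c.
Proof. intros; apply fmax_le; auto. Qed.

Lemma vnorm_ext {p} (a b : Rp p) : (forall i, Rabs (a i) = Rabs (b i)) -> vnorm a = vnorm b.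
Proof. intros H; unfold vnorm; f_equal; extensionality i; auto. Qed.

Lemma vdist_tri {p} (a b c : Rp p) : vdist a c <= vdist a b + vdist b c.
Proof.
  unfold vdist. apply vnorm_le.
  - intros i. unfold vadd, vopp.
    pose proof (vnorm_comp (vadd a (vopp b)) i). pose proof (vnorm_comp (vadd b (vopp c)) i).
    unfold vadd, vopp in *.
    replace (a i + - c i) with ((a i + - b i) + (b i + - c i)) by ring.
    eapply Rle_trans; [apply Rabs_triang|lra].
  - pose proof (vnorm_nonneg (vadd a (vopp b))); pose proof (vnorm_nonneg (vadd b (vopp c))); lra.
Qed.

Lemma Rabs_m1 : Rabs (-1) = 1.
Proof. unfold Rabs; destruct Rcase_abs; lra. Qed.

Section NS.
Variable X : NormedSpace.
Notation add := (ns_add X). Notation opp := (ns_opp X). Notation scal := (ns_scal X).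
Notation zero := (ns_zero X). Notation norm := (ns_norm X).

Lemma scal0 a : scal 0 a = zero.
Proof.
  assert (E : scal 0 a = add (scal 0 a) (scal 0 a)).
  { rewrite <- ns_scal_distr_r. f_equal. ring. }
  transitivity (add (scal 0 a) (add (scal 0 a) (opp (scal 0 a)))).
  - rewrite ns_add_opp, ns_add_zero. reflexivity.
  - rewrite ns_add_assoc, <- E, ns_add_opp. reflexivity.
Qed.

Lemma opp_scal a : opp a = scal (-1) a.
Proof.
  assert (E : add (scal (-1) a) a = zero).
  { rewrite <- (ns_scal_one X a) at 2. rewrite <- ns_scal_distr_r.
    replace (-1 + 1) with 0 by ring. apply scal0. }
  rewrite <- (ns_add_zero X (scal (-1) a)). rewrite <- (ns_add_opp X a).
  rewrite ns_add_assoc, E, ns_add_comm, ns_add_zero. reflexivity.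
Qed.

Lemma norm_zero : norm zero = 0.
Proof. rewrite <- (scal0 zero), ns_norm_scal, Rabs_R0. ring. Qed.

Lemma norm_nonneg a : 0 <= norm a.
Proof.
  pose proof (ns_norm_triangle X a (opp a)). rewrite ns_add_opp, norm_zero in H.
  rewrite opp_scal, ns_norm_scal in H. rewrite Rabs_m1 in H. lra.
Qed.

Lemma nsdist_refl a : ns_dist X a a = 0.
Proof. unfold ns_dist. rewrite ns_add_opp. apply norm_zero. Qed.

Lemma nsdist_nonneg a b : 0 <= ns_dist X a b.
Proof. apply norm_nonneg. Qed.

Lemma nsdist_sym a b : ns_dist X a b = ns_dist X b a.
Proof.
  unfold ns_dist.
  assert (E : add b (opp a) = scal (-1) (add a (opp b))).
  { rewrite ns_scal_distr_l, !opp_scal, ns_scal_assoc.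
    replace (-1 * -1) with 1 by ring. rewrite ns_scal_one, ns_add_comm. reflexivity. }
  rewrite E, ns_norm_scal, Rabs_m1. ring.
Qed.

Lemma nsdist_tri a b c : ns_dist X a c <= ns_dist X a b + ns_dist X b c.
Proof.
  unfold ns_dist.
  assert (E : add (add a (opp b)) (add b (opp c)) = add a (opp c)).
  { rewrite ns_add_assoc. f_equal. rewrite <- ns_add_assoc.
    rewrite (ns_add_comm X (opp b) b), ns_add_opp, ns_add_zero. reflexivity. }
  rewrite <- E. apply ns_norm_triangle.
Qed.
End NS.

Lemma pdist_refl (X : NormedSpace) p (a : X * Rp p) : pdist X a a = 0.
Proof.
  unfold pdist. rewrite nsdist_refl. unfold vdist.
  assert (vnorm (vadd (snd a) (vopp (snd a))) <= 0).
  { apply vnorm_le; [intros i; unfold vadd, vopp; replace (snd a i + - snd a i) with 0 by ring; rewrite Rabs_R0; lra| lra]. }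
  pose proof (vnorm_nonneg (vadd (snd a) (vopp (snd a)))). lra.
Qed.

Lemma pdist_tri (X : NormedSpace) p (a b c : X * Rp p) : pdist X a c <= pdist X a b + pdist X b c.
Proof.
  unfold pdist. pose proof (nsdist_tri X (fst a) (fst b) (fst c)).
  pose proof (vdist_tri (snd a) (snd b) (snd c)). lra.
Qed.

Lemma pdist_nonneg (X : NormedSpace) p (a b : X * Rp p) : 0 <= pdist X a b.
Proof. unfold pdist, vdist. pose proof (nsdist_nonneg X (fst a) (fst b)). pose proof (vnorm_nonneg (vadd (snd a) (vopp (snd b)))). lra. Qed.

Lemma list_min {V} (l : list (V * R)) : exists m, 0 < m /\ forall i, In i l -> 0 < snd i -> m <= snd i.
Proof.
  induction l as [|[c r] l IH].
  - exists 1; split; [lra| intros i []].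
  - destruct IH as [m [Hm H]]. destruct (Rlt_dec 0 r) as [Hr|Hr].
    + exists (Rmin r m); split; [apply Rmin_pos; auto|].
      intros i [<-|Hi] Hp; simpl in *. apply Rmin_l.
      eapply Rle_trans; [apply Rmin_r| auto].
    + exists m; split; auto. intros i [<-|Hi] Hp; simpl in *; [lra|auto].
Qed.

Lemma compact_near {V} (d : V -> V -> R)
  (tri : forall a b c, d a c <= d a b + d b c) (refl : forall a, d a a = 0)
  (S G : V -> Prop) : is_compact d S ->
  (forall eps, 0 < eps -> exists z g, S z /\ G g /\ d z g < eps) ->
  exists z, S z /\ forall eps, 0 < eps -> exists g, G g /\ d z g < eps.
Proof.
  intros Hc Hn. apply NNPP; intro Hno.
  assert (Hz : forall z, S z -> exists r, 0 < r /\ forall g, G g -> r <= d z g).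
  { intros z Hz. apply NNPP; intro Hr. apply Hno. exists z; split; auto.
    intros eps He. apply NNPP; intro Hg. apply Hr. exists eps; split; auto.
    intros g Gg. apply Rnot_lt_le. intro Hl. apply Hg. eauto. }
  set (U := fun (i : V * R) z' => S (fst i) /\ 0 < snd i /\ (forall g, G g -> snd i <= d (fst i) g) /\ d (fst i) z' < snd i / 2).
  destruct (Hc (V * R)%type U) as [l Hl].
  - intros [c r] z' [H1 [H2 [H3 H4]]]; simpl in *.
    exists (r/2 - d c z'); split; [lra|].
    intros z'' Hd. repeat split; auto. simpl. pose proof (tri c z' z''). lra.
  - intros z Sz. destruct (Hz z Sz) as [r [Hr Hg]]. exists (z, r).
    repeat split; auto. simpl. rewrite refl. lra.
  - destruct (list_min l) as [m [Hm Hmin]].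
    destruct (Hn (m/2)) as [z' [g [Sz' [Gg Hd]]]]; [lra|].
    destruct (Hl z' Sz') as [[c r] [Hi [H1 [H2 [H3 H4]]]]]. simpl in *.
    pose proof (Hmin _ Hi H2). simpl in *. pose proof (H3 g Gg). pose proof (tri c z' g). lra.
Qed.

Lemma cv_bound (u : nat -> R) : (forall k, 0 <= u k /\ u k < 2 * / INR (S k)) -> Un_cv u 0.
Proof.
  intros H eps He. destruct (INR_archimed eps 2 He) as [N HN].
  exists N. intros n Hn. unfold R_dist. rewrite Rminus_0_r.
  destruct (H n) as [H1 H2]. rewrite Rabs_right by lra.
  assert (INR N <= INR n) by (apply le_INR; lia).
  assert (HS : 0 < INR (S n)) by (apply lt_0_INR; lia).
  rewrite S_INR in *.
  assert (2 < (INR n + 1) * eps) by nra.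
  apply Rlt_le_trans with (2 * / (INR n + 1)); auto.
  apply Rmult_le_reg_r with (INR n + 1); [lra|].
  rewrite Rmult_assoc, Rinv_l by lra. lra.
Qed.

Theorem proposition6p9 (X : NormedSpace) (p : nat) (P : Rp p -> Prop)
  (F : X -> Rp p -> Prop) (x : X) (y : Rp p) (S : X * Rp p -> Prop) :
  ordering_cone P ->
  F x y ->
  lipschitz_around F x ->
  PEmin (F x) P y ->
  (exists z, S z) ->
  is_compact (pdist X) S ->
  msum (Emin (closure vdist
          (fun z => exists v w u, S (v, w) /\ Dup F P x y v u /\ z = vadd w u)) P)
       P vzero ->
  exists v w, S (v, w) /\ DF (Fup F P) x y v (vopp w).
Proof.
  intros [P0 [Pcl [Pscal [Padd [Ppt Pint]]]]] Fxy Hlip Hpe Hne Hcomp [a [q [[Hcl _] [Pq E0]]]].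
  assert (Hq : forall i, q i = - a i).
  { intros i. apply equal_f with i in E0. unfold vzero, vadd in E0. lra. }
  destruct (compact_near (pdist X) (pdist_tri X p) (pdist_refl X p) S
     (fun g => exists u, Dup F P x y (fst g) u /\ snd g = vadd a (vopp u)) Hcomp)
    as [[v w] [Sz Hnear]].
  { intros eps He. destruct (Hcl eps He) as [a' [[v' [w' [u [Sv [Du ->]]]]] Hd]].
    exists (v', w'), (v', vadd a (vopp u)). split; auto. split; [exists u; auto|].
    unfold pdist; simpl. rewrite nsdist_refl. unfold vdist in *.
    rewrite vnorm_ext with (b := vadd a (vopp (vadd w' u))). lra.
    intros i; unfold vadd, vopp; rewrite <- Rabs_Ropp; f_equal; ring. }
  exists v, w. split; auto.
  assert (K : forall k, exists t : R * (X * Rp p), 0 < fst t /\ fst t < / INR (Datatypes.S k) /\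
     pdist X (snd t) (v, vopp w) < 2 * / INR (Datatypes.S k) /\
     gph (Fup F P) (padd X (x, y) (pscal X (fst t) (snd t)))).
  { intros k. set (e := / INR (Datatypes.S k)).
    assert (He : 0 < e) by (apply Rinv_0_lt_compat, lt_0_INR; lia).
    destruct (Hnear e He) as [[v' ga] [[u [Du Hg]] Hdg]]. simpl in *. subst ga.
    destruct Du as [[h [W [Hh [Hh0 [HW Hgph]]]]] _].
    destruct (Hh0 e He) as [N1 HN1]; destruct (HW e He) as [N2 HN2].
    set (n := max N1 N2). specialize (HN1 n ltac:(lia)). specialize (HN2 n ltac:(lia)).
    unfold R_dist in HN1, HN2. rewrite Rminus_0_r in HN1, HN2.
    pose proof (Rle_abs (h n)). pose proof (Rle_abs (pdist X (W n) (v', u))).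
    exists (h n, (fst (W n), vadd (snd (W n)) q)). simpl.
    split; [auto|]. split; [lra|]. split.
    - unfold pdist in *; simpl in *.
      pose proof (nsdist_tri X (fst (W n)) v' v). rewrite (nsdist_sym X v' v) in H1.
      assert (vdist (vadd (snd (W n)) q) (vopp w) <= vdist (snd (W n)) u + vdist w (vadd a (vopp u))).
      { unfold vdist. apply vnorm_le.
        - intros i. pose proof (vnorm_comp (vadd (snd (W n)) (vopp u)) i).
          pose proof (vnorm_comp (vadd w (vopp (vadd a (vopp u)))) i).
          unfold vadd, vopp in *. rewrite Hq.
          replace (snd (W n) i + - a i + - - w i) with ((snd (W n) i + - u i) + (w i + - (a i + - u i))) by ring.
          eapply Rle_trans; [apply Rabs_triang|lra].
        - pose proof (vnorm_nonneg (vadd (snd (W n)) (vopp u))).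
          pose proof (vnorm_nonneg (vadd w (vopp (vadd a (vopp u))))). unfold vdist. lra. }
      lra.
    - specialize (Hgph n). unfold gph, Fup, msum, padd, pscal in *; simpl in *.
      destruct Hgph as [b [r [Fb [Pr Eb]]]]. exists b, (vadd r (vscal (h n) q)).
      split; auto. split; [apply Padd; auto; apply Pscal; auto; left; apply Hh|].
      extensionality i. apply equal_f with i in Eb. unfold vadd, vscal in *.
      rewrite Rmult_plus_distr_l. lra. }
  set (f := fun k => proj1_sig (constructive_indefinite_description _ (K k))).
  assert (Hf : forall k, 0 < fst (f k) /\ fst (f k) < / INR (Datatypes.S k) /\
     pdist X (snd (f k)) (v, vopp w) < 2 * / INR (Datatypes.S k) /\
     gph (Fup F P) (padd X (x, y) (pscal X (fst (f k)) (snd (f k))))).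
  { intros k. unfold f. apply proj2_sig. }
  unfold DF, tcone. exists (fun k => fst (f k)), (fun k => snd (f k)).
  split; [intros k; apply Hf|]. split; [|split].
  - apply cv_bound. intros k. destruct (Hf k) as [H1 [H2 _]].
    assert (0 < / INR (Datatypes.S k)) by (apply Rinv_0_lt_compat, lt_0_INR; lia). lra.
  - apply cv_bound. intros k. destruct (Hf k) as [_ [_ [H3 _]]].
    split; auto. apply pdist_nonneg.
  - intros k. apply Hf.
Qed.
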